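(* Let $\mathcal{X}$ be a finite set with $|\mathcal{X}|=n$, $\pi$ a probability mass function on $\mathcal{X}$ with full support, and $P$ a $\pi$-reversible transition matrix. Let a group $\mathcal{G}$ act on $\mathcal{X}$ with $k<n$ orbits $(\mathcal{O}_i)_{i=1}^k$, and let $G$ be the Gibbs orbit kernel. Then $\mathrm{spec}(GPG)=\mathrm{spec}(\overline{P})\cup\{0\}$.
   Context: $G(x,y)=\pi(y)/\pi(\mathcal{O}(x))$ for $y$ in the orbit $\mathcal{O}(x)$ of $x$, else $0$, with $\pi(A)=\sum_{z\in A}\pi(z)$. The projection chain is $\overline{P}(i,j)=\frac{1}{\pi(\mathcal{O}_i)}\sum_{x\in\mathcal{O}_i,y\in\mathcal{O}_j}\pi(x)P(x,y)$ on $\{1,\dots,k\}$. $\mathrm{spec}(K)$ denotes the set of distinct eigenvalues of $K$. *)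

(* Defs.v *)
From HB Require Import structures.
From mathcomp Require Import all_boot all_order all_algebra all_fingroup.
Set Implicit Arguments. Unset Strict Implicit. Unset Printing Implicit Defensive.
Import GRing.Theory Num.Theory.
Local Open Scope ring_scope.

Definition orbits_of (gT : finGroupType) (H : {group gT}) (n : nat)
  (to : action H 'I_n) : {set {set 'I_n}} :=
  [set orbit to H x | x in [set: 'I_n]].

Definition orb (gT : finGroupType) (H : {group gT}) (n : nat)
  (to : action H 'I_n) (i : 'I_#|orbits_of to|) : {set 'I_n} :=
  enum_val i.

Definition massof (R : numFieldType) (n : nat) (pi : 'I_n -> R) (A : {set 'I_n}) : R :=
  \sum_(z in A) pi z.

Definition gibbs_orbit_kernel (R : numFieldType) (gT : finGroupType) (H : {group gT})
  (n : nat) (to : action H 'I_n) (pi : 'I_n -> R) : 'M[R]_n :=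
  \matrix_(x, y) (if y \in orbit to H x then pi y / massof pi (orbit to H x) else 0).

Definition projection_chain (R : numFieldType) (gT : finGroupType) (H : {group gT})
  (n : nat) (to : action H 'I_n) (pi : 'I_n -> R) (P : 'M[R]_n)
  : 'M[R]_#|orbits_of to| :=
  \matrix_(i, j) ((massof pi (orb i))^-1 *
     \sum_(x in orb i) \sum_(y in orb j) pi x * P x y).

Definition spec (F : fieldType) (m : nat) (K : 'M[F]_m) : F -> Prop :=
  fun a => eigenvalue K a.

(* Main.v *)
Require Import Defs.
From HB Require Import structures.
From mathcomp Require Import all_boot all_order all_algebra all_fingroup.
From mathcomp Require Import reals.
Import Order.TTheory GRing.Theory Num.Theory.
Local Open Scope ring_scope.

Lemma spec_factor (F : fieldType) n k (U : 'M[F]_(n,k)) (V : 'M[F]_(k,n)) (B : 'M[F]_k) a :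
  V *m U = 1%:M -> (k < n)%N ->
  eigenvalue (U *m B *m V) a <-> eigenvalue B a \/ a = 0.
Proof.
move=> VU kn; split.
- move=> /eigenvalueP [v Hv vn0].
  have [->|a0] := eqVneq a 0; first by right.
  left; apply/eigenvalueP; exists (v *m U).
    by have := congr1 (mulmx^~ U) Hv; rewrite /= -scalemxAl -!mulmxA VU mulmx1 !mulmxA.
  apply/eqP => vU0; move: Hv; rewrite !mulmxA vU0 !mul0mx => /esym/eqP.
  by rewrite scaler_eq0 (negbTE a0) (negbTE vn0).
- case=> [/eigenvalueP [w Hw wn0]|->].
    apply/eigenvalueP; exists (w *m V).
      by rewrite !mulmxA -(mulmxA w) VU mulmx1 Hw scalemxAl.
    apply/eqP => wV0; move: wn0; rewrite -(mulmx1 w) -VU mulmxA wV0 mul0mx.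
    by rewrite eqxx.
  rewrite /eigenvalue /eigenspace raddf0 subr0 kermx_eq0 /row_free.
  apply: contraTN kn => /eqP <-; rewrite -leqNgt.
  apply: leq_trans (mxrankM_maxl _ _) _; apply: leq_trans (mxrankM_maxl _ _) _.
  exact: rank_leq_col.
Qed.

Section Orb.
Variables (R : realType) (n : nat) (pi : 'I_n -> R) (gT : finGroupType) (H : {group gT}) (to : action H 'I_n).
Hypothesis pi_pos : forall x, 0 < pi x.

Lemma orb_mem (i : 'I_#|orbits_of to|) x : x \in orb i -> orb i = orbit to H x.
Proof.
rewrite /orb; have /imsetP [z _ ->] := enum_valP i => hx.
by apply/esym; apply/(orbit_in_eqP (G:=H)).
Qed.

Lemma orb_ex x : exists i : 'I_#|orbits_of to|, orb i = orbit to H x.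
Proof.
have hx : orbit to H x \in orbits_of to by apply/imsetP; exists x.
by exists (enum_rank_in hx (orbit to H x)); rewrite /orb enum_rankK_in.
Qed.

Lemma orb_uniq (i j : 'I_#|orbits_of to|) x : x \in orb i -> x \in orb j -> i = j.
Proof.
move=> /orb_mem hi /orb_mem hj; apply: enum_val_inj; by rewrite -/(orb i) -/(orb j) hi hj.
Qed.

Lemma mass_pos (A : {set 'I_n}) x : x \in A -> 0 < massof pi A.
Proof.
move=> xA; rewrite /massof (bigD1 x) //=; apply: ltr_wpDr; last exact: pi_pos.
by apply: sumr_ge0 => y _; apply: ltW.
Qed.


Definition Um : 'M[R]_(n, #|orbits_of to|) := \matrix_(x, i) (x \in orb i)%:R.
Definition Vm : 'M[R]_(#|orbits_of to|, n) :=
  \matrix_(i, y) ((y \in orb i)%:R * (pi y / massof pi (orb i))).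

Lemma G_eq : gibbs_orbit_kernel to pi = Um *m Vm.
Proof.
apply/matrixP => x y; rewrite !mxE; have [i hi] := orb_ex x.
have xi : x \in orb i by rewrite hi orbit_refl.
rewrite (bigD1 i) //= big1 => [|j ji]; rewrite !mxE.
  rewrite xi mul1r addr0 -hi; case: ifP => _; by rewrite ?mul1r ?mul0r.
case: (boolP (x \in orb j)) => xj; last by rewrite mul0r.
by move: ji; rewrite (orb_uniq _ _ _ xj xi) eqxx.
Qed.

Lemma orb_nonempty (i : 'I_#|orbits_of to|) : exists z, z \in orb i.
Proof. by rewrite /orb; have /imsetP [z _ ->] := enum_valP i; exists z; apply: orbit_refl. Qed.

Lemma VU : Vm *m Um = 1%:M.
Proof.
apply/matrixP => i j; rewrite !mxE.
case: (eqVneq i j) => [<-|ij].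
  have [z zi] := orb_nonempty i.
  have m0 : massof pi (orb i) != 0 by rewrite gt_eqF // (mass_pos _ _ zi).
  rewrite (eq_bigr (fun y : 'I_n => (y \in orb i)%:R * pi y / massof pi (orb i))); last first.
    by move=> y _; rewrite !mxE; case: (y \in orb i); rewrite ?mul1r ?mul0r ?mulr1 ?mulr0 ?mulrA.
  rewrite -big_distrl /= -[X in X / _]/(\sum_(y < n) _).
  suff -> : \sum_(y < n) (y \in orb i)%:R * pi y = massof pi (orb i) by rewrite divff.
  rewrite /massof [RHS]big_mkcond /=; apply: eq_bigr => y _.
  by case: (y \in orb i); rewrite ?mul1r ?mul0r.
apply: big1 => y _; rewrite !mxE.
case: (boolP (y \in orb i)) => yi; last by rewrite !mul0r.
case: (boolP (y \in orb j)) => yj; last by rewrite mulr0.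
by move: ij; rewrite (orb_uniq _ _ _ yi yj) eqxx.
Qed.

Lemma Pbar_eq (P : 'M[R]_n) : projection_chain to pi P = Vm *m P *m Um.
Proof.
apply/matrixP => i j; rewrite !mxE.
symmetry; under eq_bigr do rewrite mxE big_distrl /=.
rewrite exchange_big /= mulr_sumr [RHS]big_mkcond /=; apply: eq_bigr => x _.
case: (boolP (x \in orb i)) => xi.
  rewrite mulr_sumr [RHS]big_mkcond /=; apply: eq_bigr => y _; rewrite !mxE xi.
  case: (y \in orb j); rewrite /= ?mulr1 ?mulr0 //.
  by rewrite mul1r -mulrA mulrCA.
rewrite big1 // => y _; rewrite !mxE (negbTE xi) !mul0r.
by [].
Qed.

End Orb.

Theorem proposition6p2 (R : realType) (n : nat) (pi : 'I_n -> R) (P : 'M[R]_n)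
  (gT : finGroupType) (H : {group gT}) (to : action H 'I_n) :
  (forall x, 0 < pi x) ->
  \sum_(x < n) pi x = 1 ->
  (forall x y, 0 <= P x y) ->
  (forall x, \sum_(y < n) P x y = 1) ->
  (forall x y, pi x * P x y = pi y * P y x) ->
  (#|orbits_of to| < n)%N ->
  forall a : R,
    spec (gibbs_orbit_kernel to pi *m P *m gibbs_orbit_kernel to pi) a <->
    (spec (projection_chain to pi P) a \/ a = 0).
Proof.
move=> pos _ _ _ _ kn a; rewrite /spec G_eq Pbar_eq.
have := spec_factor _ _ _ _ _ (Vm _ _ pi _ _ to *m P *m Um _ _ _ _ to) a (VU _ _ _ _ _ _ pos) kn; rewrite !mulmxA; exact.
Qed.
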